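(* Let $n$ be a positive integer. For every rational number $x$ with $1/(n+1)<x<1/n$, we have $\mathcal{I}(1/(n+1))<\mathcal{I}(x)<\mathcal{I}(1/n)$.
   Context: For $x\in\mathbb{R}$ let $\{x\}=x-\lfloor x\rfloor$. The interrobang function $\mathcal{I}\colon[0,1]\cap\mathbb{Q}\to\mathbb{R}$ is defined recursively by $\mathcal{I}(0)=0$; $\mathcal{I}(x)=4^{-\lfloor1/x\rfloor}\big(1-2\,\mathcal{I}(\{1/x\})\big)$ if $0<x\le\tfrac12$; and $\mathcal{I}(x)=\tfrac38-\tfrac34\,\mathcal{I}(1/x-1)-\tfrac12\,\mathcal{I}(1-x)$ if $\tfrac12<x\le1$. The recursion is well founded: with the height $a/b\mapsto|a|+|b|$ ($\gcd(a,b)=1$), every argument on the right-hand side has strictly smaller height than $x$, so $\mathcal{I}$ is uniquely defined. *)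

(* Defs.v *)
From HB Require Import structures.
From mathcomp Require Import all_boot all_order all_algebra.
Set Implicit Arguments. Unset Strict Implicit. Unset Printing Implicit Defensive.
Import Order.TTheory GRing.Theory Num.Theory.
Local Open Scope ring_scope.

Definition fracq (x : rat) : rat := x - (Num.floor x)%:~R.

Definition heightq (x : rat) : nat := (`|numq x| + `|denq x|)%N.

(* Every
   recursive argument has strictly smaller height, so fuel > height x
   suffices and the value does not depend on the fuel beyond that. *)
Fixpoint interrobang_fuel (k : nat) (x : rat) : rat :=
  match k with
  | O => 0
  | k'.+1 =>
    if x == 0 then 0
    else if x <= 1 / 2 then
      (4%:Q) ^ (- Num.floor (x^-1)) * (1 - 2 * interrobang_fuel k' (fracq (x^-1)))
    else
      3 / 8 - 3 / 4 * interrobang_fuel k' (x^-1 - 1)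
            - 1 / 2 * interrobang_fuel k' (1 - x)
  end.

(* The interrobang function I : [0,1] ∩ Q -> Q (values outside [0,1] are
   irrelevant junk). *)
Definition interrobang (x : rat) : rat := interrobang_fuel (heightq x).+1 x.

(* Main.v *)
Require Import Defs.
From mathcomp Require Import all_boot all_order all_algebra.
From mathcomp Require Import lra.
Import Order.TTheory GRing.Theory Num.Theory.
Local Open Scope ring_scope.

Notation I := interrobang_fuel.

Lemma fuelS k y : I k.+1 y =
  if y == 0 then 0
    else if y <= 1 / 2 then
      (4%:Q) ^ (- Num.floor (y^-1)) * (1 - 2 * I k (Defs.fracq (y^-1)))
    else
      3 / 8 - 3 / 4 * I k (y^-1 - 1) - 1 / 2 * I k (1 - y).
Proof. by []. Qed.

Lemma pow4 (m : int) : 2 <= m -> 0 < (4%:Q) ^ (- m) <= 1/16.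
Proof.
case: m => // p; rewrite lez_nat => hp.
rewrite -exprnN.
have h : 16 <= (4%:Q) ^+ p.
  have -> : p = (2 + (p - 2))%N by rewrite subnKC.
  rewrite exprD; have h1 : 1 <= (4%:Q) ^+ (p - 2) by apply: exprn_ege1.
  have -> : (4%:Q) ^+ 2 = 16 by [].
  lra.
have hp0 : 0 < (4%:Q) ^+ p by lra.
apply/andP; split; first by rewrite invr_gt0.
have -> : (1/16 : rat) = 16^-1 by rewrite div1r.
rewrite lef_pV2 ?posrE //; lra.
Qed.

Lemma frac_bnd t : 0 <= Defs.fracq t < 1.
Proof.
rewrite /Defs.fracq.
have h1 := @floor_le rat t.
have h2 : t < ((Num.floor t)%:~R : rat) + 1.
  by have := @floorD1_gt _ t; rewrite intrD.
move: h1 h2; set f : rat := (Num.floor t)%:~R => h1 h2.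
rewrite subr_ge0 h1 /=. lra.
Qed.

Lemma inv_bnd (y : rat) : 0 < y <= 1/2 -> (2 : int) <= Num.floor (y^-1 : rat).
Proof.
move=> /andP[y0 y2]. rewrite (@floor_ge_int rat).
have ht : y * y^-1 = 1 by rewrite mulfV // gt_eqF.
have t0 : 0 < y^-1 by rewrite invr_gt0.
have : 2%:~R = (2 : rat) by []. move=> ->. nra.
Qed.

Lemma W k : forall y, 0 <= y <= 1 -> 0 <= I k y <= 3/8 /\ (y <= 1/2 -> I k y <= 1/16).
Proof.
elim: k => [|k IH] y /andP[y0 y1]; first by split=> //; lra.
rewrite fuelS. case: eqP => [_|/eqP yn0]; first by split=> //; lra.
have yp : 0 < y by rewrite lt_neqAle eq_sym yn0.
case: ifP => hy.
  have /andP[p0 p1] := pow4 _ (@inv_bnd y (introT andP (conj yp hy))).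
  have /andP[f0 f1] := frac_bnd (y^-1).
  have [[/andP[i0 i1]] _] := IH (Defs.fracq y^-1) (introT andP (conj f0 (ltW f1))).
  set P := _ ^ _ in p0 p1 *. set J := I k _ in i0 i1 *.
  have : 0 <= P * (1 - 2 * J) <= P by apply/andP; split; nra.
  move=> /andP[h1 h2]; split; [apply/andP; split|]; lra.
have hy' : 1/2 < y by rewrite ltNge hy.
have ht : y * y^-1 = 1 by rewrite mulfV // gt_eqF.
have t0 : 0 < y^-1 by rewrite invr_gt0.
have [[/andP[a0 a1]] _] := IH (y^-1 - 1) (introT andP (conj (ltac:(nra) : 0 <= y^-1 - 1) (ltac:(nra) : y^-1 - 1 <= 1))).
have [[/andP[b0 b1]] b2] := IH (1 - y) (introT andP (conj (ltac:(lra) : 0 <= 1 - y) (ltac:(lra) : 1 - y <= 1))).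
have b3 := b2 (ltac:(lra)).
split; [apply/andP; split|]; lra.
Qed.

Lemma I0 k : I k 0 = 0.
Proof. by case: k => // k; rewrite fuelS eqxx. Qed.

Lemma S k y : 0 < y <= 1 -> 0 < I k.+1 y.
Proof.
move=> /andP[yp y1]; rewrite fuelS gt_eqF //.
case: ifP => hy.
  have /andP[p0 p1] := pow4 _ (@inv_bnd y (introT andP (conj yp hy))).
  have /andP[f0 f1] := frac_bnd (y^-1).
  have [[/andP[i0 i1]] _] := W k _ (introT andP (conj f0 (ltW f1))).
  set P := _ ^ _ in p0 p1 *. set J := I k _ in i0 i1 *. nra.
have hy' : 1/2 < y by rewrite ltNge hy.
have ht : y * y^-1 = 1 by rewrite mulfV // gt_eqF.
have t0 : 0 < y^-1 by rewrite invr_gt0.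
have [[/andP[a0 a1]] _] := W k _ (introT andP (conj (ltac:(nra) : 0 <= y^-1 - 1) (ltac:(nra) : y^-1 - 1 <= 1))).
have [[/andP[b0 b1]] b2] := W k _ (introT andP (conj (ltac:(lra) : 0 <= 1 - y) (ltac:(lra) : 1 - y <= 1))).
have b3 := b2 (ltac:(lra)).
lra.
Qed.

Lemma U k y : 0 < y < 1 -> I k.+2 y < 3/8.
Proof.
move=> /andP[yp y1]; rewrite fuelS gt_eqF //.
case: ifP => hy.
  have /andP[p0 p1] := pow4 _ (@inv_bnd y (introT andP (conj yp hy))).
  have /andP[f0 f1] := frac_bnd (y^-1).
  have [[/andP[i0 i1]] _] := W k.+1 _ (introT andP (conj f0 (ltW f1))).
  set P := _ ^ _ in p0 p1 *. set J := I k.+1 _ in i0 i1 *. nra.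
have hy' : 1/2 < y by rewrite ltNge hy.
have ht : y * y^-1 = 1 by rewrite mulfV // gt_eqF.
have t0 : 0 < y^-1 by rewrite invr_gt0.
have a0 := S k _ (introT andP (conj (ltac:(nra) : 0 < y^-1 - 1) (ltac:(nra) : y^-1 - 1 <= 1))).
have [[/andP[b0 b1]] b2] := W k.+1 _ (introT andP (conj (ltac:(lra) : 0 <= 1 - y) (ltac:(lra) : 1 - y <= 1))).
lra.
Qed.

Lemma floor_nat (m : nat) : Num.floor (m%:R : rat) = m.
Proof. exact: (intrKfloor (Posz m)). Qed.

Lemma Iinv k (m : nat) : (2 <= m)%N -> I k.+1 (m%:R^-1) = (4%:Q ^+ m)^-1.
Proof.
move=> hm.
have m0 : (0 : rat) < m%:R by rewrite ltr0n; case: m hm.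
rewrite fuelS invr_eq0 gt_eqF // invrK.
have -> : (m%:R^-1 : rat) <= 1/2.
  have -> : (1/2 : rat) = 2%:R^-1 by rewrite div1r.
  by rewrite lef_pV2 ?posrE // ?ler_nat.
rewrite floor_nat /Defs.fracq floor_nat subrr I0 mulr0 subr0 mulr1.
by rewrite -exprnN.
Qed.

Lemma height_ge2 x : x != 0 -> (2 <= heightq x)%N.
Proof.
move=> x0; rewrite /heightq.
have h1 : (0 < `|numq x|)%N by rewrite absz_gt0 numq_eq0.
have h2 : (0 < `|denq x|)%N by rewrite absz_gt0 denq_neq0.
by rewrite -(addn1 1) leq_add.
Qed.

Theorem mainTheorem8 (n : nat) (hn : (0 < n)%N) (x : rat) :
  (n.+1%:R)^-1 < x < (n%:R)^-1 ->
  interrobang ((n.+1%:R)^-1) < interrobang x < interrobang ((n%:R)^-1).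
Proof.
move=> /andP[hl hr].
have n1p : (0 : rat) < n.+1%:R by rewrite ltr0n.
have np : (0 : rat) < n%:R by rewrite ltr0n.
have xp : 0 < x by apply: lt_trans hl; rewrite invr_gt0.
have x0 : x != 0 by rewrite gt_eqF.
have ht : x * x^-1 = 1 by rewrite mulfV.
have t0 : 0 < x^-1 by rewrite invr_gt0.
have tl : n%:R < x^-1 by rewrite -[n%:R]invrK ltf_pV2 ?posrE ?invr_gt0.
have tr : x^-1 < n.+1%:R by rewrite -[n.+1%:R]invrK ltf_pV2 ?posrE ?invr_gt0.
rewrite /interrobang.
have := @height_ge2 x x0; case hh: (heightq x) => [|[|h]] // _.
case: n hn np n1p hl hr tl tr => // -[|n] _ np n1p hl hr tl tr.
  rewrite Iinv // invr1 (fuelS (heightq 1) 1) oner_eq0.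
  rewrite (_ : (1 : rat) <= 1 / 2 = false); last by apply/negbTE; rewrite -ltNge; lra.
  rewrite subrr I0 mulr0 mulr0 !subr0.
  rewrite (fuelS h.+2 x) (negbTE x0).
  have hx1 : 1/2 < x by move: hl; rewrite (_ : (2%:R : rat)^-1 = 1/2) // div1r.
  have hx2 : x < 1 by move: hr; rewrite invr1.
  rewrite (_ : x <= 1/2 = false); last by apply/negbTE; rewrite -ltNge.
  have a0 := S h.+1 _ (introT andP (conj (ltac:(nra) : 0 < x^-1 - 1) (ltac:(nra) : x^-1 - 1 <= 1))).
  have a1 := U h _ (introT andP (conj (ltac:(nra) : 0 < x^-1 - 1) (ltac:(nra) : x^-1 - 1 < 1))).
  have [[/andP[b0 b1]] b2] := W h.+2 _ (introT andP (conj (ltac:(lra) : 0 <= 1 - x) (ltac:(lra) : 1 - x <= 1))).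
  have b3 := b2 (ltac:(lra)).
  have -> : (4%:Q ^+ 2)^-1 = 1/16 by rewrite div1r.
  apply/andP; split; lra.
rewrite !Iinv // (fuelS h.+2 x) (negbTE x0).
have hx : x <= 1/2.
  apply: (le_trans (ltW hr)).
  have -> : (1/2 : rat) = 2%:R^-1 by rewrite div1r.
  by rewrite lef_pV2 ?posrE // ?ler_nat.
rewrite hx.
have fl : Num.floor (x^-1) = n.+2.
  apply/eqP; rewrite floor_eq; apply/andP; split.
    by apply: ltW.
  by rewrite intrD -natrD addn1.
rewrite fl /Defs.fracq fl.
have z0 : 0 < x^-1 - (Posz n.+2)%:~R by rewrite subr_gt0.
have z1 : x^-1 - (Posz n.+2)%:~R < 1.
  have e : (n.+3%:R : rat) = n.+2%:R + 1 by rewrite -addn1 natrD.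
  change ((Posz n.+2)%:~R : rat) with (n.+2%:R : rat); lra.
have a0 := S h.+1 _ (introT andP (conj z0 (ltW z1))).
have a1 := U h _ (introT andP (conj z0 z1)).
rewrite -exprnN exprS invfM.
set P := (4%:Q ^+ n.+2)^-1.
have Pp : 0 < P by rewrite invr_gt0 exprn_gt0.
set J := I _ _ in a0 a1 *.
apply/andP; split; nra.
Qed.
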